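(* Let $a>0$. Then the function $$[0,1]\ni x\mapsto\bigl[\sinh(a)\cos(a)+\cosh(a)\sin(a)\bigr]\cosh(ax)\cos(ax)-\bigl[\sinh(a)\cos(a)-\cosh(a)\sin(a)\bigr]\sinh(ax)\sin(ax)$$ attains its maximum on $[0,1]$ at $x=1$. *)

(* Defs.v *)
From Stdlib Require Import Reals.
Open Scope R_scope.

Definition fC4 (a x : R) : R :=
  (sinh a * cos a + cosh a * sin a) * cosh (a * x) * cos (a * x)
  - (sinh a * cos a - cosh a * sin a) * sinh (a * x) * sin (a * x).

(* Main.v *)
Require Import Defs.
From Stdlib Require Import Reals Lra Nsatz.
Open Scope R_scope.

Lemma sinh_add x y : sinh (x + y) = sinh x * cosh y + cosh x * sinh y.
Proof.
  unfold sinh, cosh. rewrite Ropp_plus_distr, !exp_plus. field.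
Qed.
Lemma cosh_add x y : cosh (x + y) = cosh x * cosh y + sinh x * sinh y.
Proof.
  unfold sinh, cosh. rewrite Ropp_plus_distr, !exp_plus. field.
Qed.
Lemma sinh_sub x y : sinh (x - y) = sinh x * cosh y - cosh x * sinh y.
Proof.
  unfold Rminus. rewrite sinh_add. unfold sinh, cosh. rewrite Ropp_involutive. field.
Qed.
Lemma cosh_sub x y : cosh (x - y) = cosh x * cosh y - sinh x * sinh y.
Proof.
  unfold Rminus. rewrite cosh_add. unfold sinh, cosh. rewrite Ropp_involutive. field.
Qed.

Lemma cosh_ge1 x : 1 <= cosh x.
Proof.
  unfold cosh. rewrite exp_Ropp.
  assert (H := exp_pos x). set (e := exp x) in *.
  assert (0 <= (e - 1) * (e - 1) / e).
  { apply Rmult_le_pos. apply Rle_0_sqr. left; apply Rinv_0_lt_compat; lra. }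
  replace ((e + / e) / 2) with (1 + (e - 1) * (e - 1) / e / 2) by (field; lra).
  lra.
Qed.

Lemma sinh_ge_sin x : 0 <= x -> sin x <= sinh x.
Proof.
  intros Hx.
  set (f := fun y => sinh y - sin y).
  assert (pr : derivable f).
  { unfold f. apply derivable_minus. apply derivable_sinh. apply derivable_sin. }
  assert (Hinc : increasing f).
  { apply (nonneg_derivative_1 f pr). intro y.
    assert (Hd : derivable_pt_lim f y (cosh y - cos y)).
    { unfold f. apply derivable_pt_lim_minus. apply derivable_pt_lim_sinh.
      apply derivable_pt_lim_sin. }
    rewrite (derive_pt_eq_0 f y (cosh y - cos y) (pr y) Hd).
    pose proof (cosh_ge1 y). pose proof (COS_bound y). lra. }
  specialize (Hinc 0 x Hx). unfold f in Hinc. rewrite sinh_0, sin_0 in Hinc. lra.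
Qed.

Theorem corollaryC4 (a : R) (ha : 0 < a) :
  forall x : R, 0 <= x <= 1 -> fC4 a x <= fC4 a 1.
Proof.
  intros x Hx.
  set (u := a + a * x). set (v := a - a * x).
  assert (Hid : 2 * (fC4 a 1 - fC4 a x) =
     ((sinh u - sin u) * (cosh v - cos v) + (cosh u - cos u) * (sinh v - sin v))).
  { unfold fC4, u, v. rewrite Rmult_1_r.
    rewrite sinh_add, cosh_add, sinh_sub, cosh_sub, sin_plus, cos_plus, sin_minus, cos_minus.
    assert (H1 : cosh a * cosh a = 1 + sinh a * sinh a) by (unfold cosh, sinh; rewrite exp_Ropp; field; apply Rgt_not_eq, exp_pos).
    assert (H2 : cosh (a*x) * cosh (a*x) = 1 + sinh (a*x) * sinh (a*x)) by (unfold cosh, sinh; rewrite exp_Ropp; field; apply Rgt_not_eq, exp_pos).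
    pose proof (sin2_cos2 a) as H3. pose proof (sin2_cos2 (a*x)) as H4. unfold Rsqr in H3, H4.
    revert H1 H2 H3 H4.
    generalize (sinh a) (cosh a) (sin a) (cos a) (sinh (a*x)) (cosh (a*x)) (sin (a*x)) (cos (a*x)).
    intros. nsatz. }
  assert (Hu : 0 <= u) by (unfold u; nra).
  assert (Hv : 0 <= v) by (unfold v; nra).
  pose proof (sinh_ge_sin u Hu). pose proof (sinh_ge_sin v Hv).
  pose proof (cosh_ge1 u). pose proof (cosh_ge1 v).
  pose proof (COS_bound u). pose proof (COS_bound v).
  assert (0 <= (sinh u - sin u) * (cosh v - cos v)) by (apply Rmult_le_pos; lra).
  assert (0 <= (cosh u - cos u) * (sinh v - sin v)) by (apply Rmult_le_pos; lra).
  lra.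
Qed.
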